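(* Let $F$ be an algebraically closed field of characteristic $\neq 2$, let $R=F[t]$ with the involution ${}^*$ described in the context, and let $A\in M_2(R)$ satisfy $A^*=A$, $\det(A)\neq 0$ and $\gcd(A)=1$. Then $A$ is congruent to the diagonal matrix $\mathrm{diag}(1,\det(A))$, i.e. there is $S\in \mathrm{GL}_2(R)$ with $S^*AS=\mathrm{diag}(1,\det(A))$.
   Context: $R=F[t]$ is the polynomial ring over $F$, and ${}^*$ is the $F$-algebra involution of $R$ that is the identity on $F$ and sends $t$ to $-t$. For $A=(a_{ij})\in M_n(R)$, $A^*$ is the matrix whose $(i,j)$ entry is $a_{ji}^*$. $A$ is hermitian if $A^*=A$ and skew-hermitian if $A^*=-A$. Two such matrices $A,B$ are congruent if $B=S^*AS$ for some $S\in\mathrm{GL}_n(R)$. For a hermitian or skew-hermitian $A$, $\gcd(A)$ denotes the monic generator (or $0$) of the ideal of $R$ generated by all entries of $A$. *)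

(* Defs.v *)
From HB Require Import structures.
From mathcomp Require Import all_boot all_order all_algebra all_field.
Set Implicit Arguments. Unset Strict Implicit. Unset Printing Implicit Defensive.
Import GRing.Theory.
Local Open Scope ring_scope.

Definition pstar (F : fieldType) (p : {poly F}) : {poly F} := p \Po (- 'X).

Definition mxstar (F : fieldType) (m n : nat) (A : 'M[{poly F}]_(m, n))
  : 'M[{poly F}]_(n, m) := \matrix_(i, j) pstar (A j i).

(* gcd(A) = 1: the ideal of F[t] generated by the entries of A is all of F[t]. *)
Definition entries_gcd1 (F : fieldType) (m n : nat) (A : 'M[{poly F}]_(m, n)) : Prop :=
  exists C : 'M[{poly F}]_(m, n), \sum_(i < m) \sum_(j < n) C i j * A i j = 1.

(* Main.v *)
Require Import Defs.
From HB Require Import structures.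
From mathcomp Require Import all_boot all_order all_algebra all_field.
Import GRing.Theory.
Local Open Scope ring_scope.
From mathcomp Require Import ring zify.

Section S.
Variable F : closedFieldType.
Implicit Types p q : {poly F}.
Lemma pstarD p q : pstar (p + q) = pstar p + pstar q.
Proof. exact: comp_polyD. Qed.
Lemma pstarM p q : pstar (p * q) = pstar p * pstar q.
Proof. exact: comp_polyM. Qed.
Lemma pstarC (c : F) : pstar c%:P = c%:P.
Proof. exact: comp_polyC. Qed.
Lemma pstar1 : pstar (1 : {poly F}) = 1.
Proof. exact: comp_polyC. Qed.
Lemma pstar0 : pstar (0 : {poly F}) = 0.
Proof. exact: comp_poly0. Qed.
Lemma pstarN p : pstar (- p) = - pstar p.
Proof. by rewrite /pstar -(scaleN1r p) comp_polyZ scaleN1r. Qed.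
Lemma pstarB p q : pstar (p - q) = pstar p - pstar q.
Proof. by rewrite pstarD pstarN. Qed.
Lemma pstarX : pstar ('X : {poly F}) = - 'X.
Proof. exact: comp_polyX. Qed.
Lemma pstarK p : pstar (pstar p) = p.
Proof.
have h : (- 'X : {poly F}) \Po (- 'X) = 'X.
  by rewrite -(scaleN1r 'X) comp_polyZ comp_polyX !scaleN1r opprK.
by rewrite /pstar -comp_polyA h comp_polyXr.
Qed.
Lemma hornerstar p x : (pstar p).[x] = p.[-x].
Proof. by rewrite /pstar horner_comp hornerN hornerX. Qed.
Lemma det22 (A : 'M[{poly F}]_2) : \det A = A 0 0 * A 1 1 - A 0 1 * A 1 0.
Proof.
rewrite (expand_det_row _ ord0) !big_ord_recl big_ord0 /cofactor !det_mx11 !mxE /=.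
rewrite /bump /= expr0 expr1 !mul1r mulN1r addr0 mulrN.
have -> : lift ord0 (0 : 'I_1) = 1 by apply: val_inj.
have -> : lift (1 : 'I_2) (0 : 'I_1) = 0 by apply: val_inj.
by [].
Qed.

Ltac push := rewrite ?(pstarD, pstarM, pstarN, pstarB, pstarK, pstarC, pstar1, pstar0, pstarX).

Lemma sqrt_ex (c : F) : exists s, s * s = c.
Proof.
have /closed_rootP [s hs] : size ('X^2 - c%:P : {poly F}) != 1.
  by rewrite size_XnsubC.
by exists s; move: hs; rewrite rootE !hornerE subr_eq0 expr2 => /eqP.
Qed.

Lemma dvd_even (e : {poly F}) (r : F) (hF : 2%:R != 0 :> F) :
  pstar e = e -> root e r -> ('X^2 - (r * r)%:P) %| e.
Proof.
move=> he hr.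
have hm : ('X^2 - (r * r)%:P : {poly F}) = ('X - r%:P) * ('X - (- r)%:P).
  by rewrite polyCM polyCN; ring.
have [r0|rn0] := eqVneq r 0.
  move: hr; rewrite r0 mulr0 subr0 -dvdp_XsubCl subr0 => /dvdpP [f ef].
  have hf : f.[0] = 0.
    have : pstar e = e by [].
    rewrite ef pstarM pstarX => h.
    have h2 : (f + pstar f) * 'X = 0 by rewrite mulrDl; move: h; rewrite mulrN -mulNr => <-; ring.
    move/eqP: h2; rewrite mulf_eq0 polyX_eq0 orbF => /eqP h3.
    have := congr1 (fun p => p.[0]) h3; rewrite /= hornerD hornerstar oppr0 horner0.
    by move/eqP; rewrite -mulr2n -mulr_natl mulf_eq0 (negbTE hF) => /eqP.
  have : 'X %| f by rewrite -['X]subr0 dvdp_XsubCl rootE hf.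
  move=> /dvdpP [g eg]; rewrite ef eg expr2.
  by apply/dvdpP; exists g; rewrite mulrA.
rewrite hm Gauss_dvdp.
  rewrite !dvdp_XsubCl hr /= rootE -[e in e.[_]]he hornerstar opprK.
  exact: hr.
rewrite coprimep_XsubC rootE !hornerE -opprD oppr_eq0 -mulr2n -mulr_natl mulf_eq0 negb_or hF.
exact: rn0.
Qed.

Lemma norm_lemma (hF : 2%:R != 0 :> F) n (e : {poly F}) :
  (size e <= n)%N -> pstar e = e ->
  exists y, y * pstar y = e /\ (e.[0] != 0 -> coprimep y (pstar y)).
Proof.
elim: n e => [|n IH] e.
  rewrite size_poly_leq0 => /eqP -> _; exists 0.
  by rewrite mul0r horner0 eqxx.
move=> hs he.
have [hs1|hs2] := leqP (size e) 1.
  rewrite (size1_polyC hs1); have [s hs0] := sqrt_ex (e`_0).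
  exists s%:P; split; first by push; rewrite -polyCM hs0.
  rewrite hornerC => h0; apply/Pdiv.ClosedField.coprimepP => x; rewrite rootE hornerC => /eqP s0.
  by move: h0; rewrite -hs0 s0 mul0r eqxx.
have /closed_rootP [r hr] : size e != 1 by rewrite gtn_eqF.
set m : {poly F} := 'X^2 - (r * r)%:P.
have hmd : m %| e by apply: dvd_even.
have m0 : m != 0 by rewrite -size_poly_eq0 size_XnsubC.
set e1 := e %/ m.
have ee : e = e1 * m by rewrite divpK.
have hms : pstar m = m by rewrite /m; push; rewrite -expr2 sqrrN.
have he1 : pstar e1 = e1.
  apply: (mulIf m0); rewrite -ee -he; rewrite [in RHS]ee pstarM hms //.
have hs1 : (size e1 <= n)%N.
  by rewrite size_divp // size_XnsubC //= leq_subLR (leq_trans hs) // add2n leqW.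
have [y1 [hy1 hc1]] := IH e1 hs1 he1.
have [i hi] := sqrt_ex (-1).
pose sg := if root y1 (- r) then - r else r.
have sg2 : sg * sg = r * r by rewrite /sg; case: ifP => _ //; rewrite mulrNN.
exists (i%:P * ('X - sg%:P) * y1); split.
  have -> : i%:P * ('X - sg%:P) * y1 * pstar (i%:P * ('X - sg%:P) * y1)
     = - (i * i)%:P * ('X^2 - (sg * sg)%:P) * (y1 * pstar y1).
    by push; rewrite !polyCM; ring.
  by rewrite hi sg2 hy1 polyCN opprK mul1r ee mulrC.
move=> e0.
have rn0 : r != 0 by apply: contraNneq e0 => r0; move: hr; rewrite r0 rootE.
have e10 : e1.[0] != 0 by move: e0; rewrite ee hornerM mulf_eq0 negb_or => /andP[].
have cp := hc1 e10.
have sg0 : sg != 0 by rewrite /sg; case: ifP => _ //; rewrite oppr_eq0.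
have nsg : ~~ root y1 (- sg).
  rewrite /sg; case: ifP => [h|->] //.
  rewrite opprK; apply/negP => h2.
  by have := coprimep_root cp h; rewrite hornerstar opprK rootE in h2 *; rewrite (eqP h2) eqxx.
have i0 : i != 0 by apply: contra_eq_neq hi => ->; rewrite mul0r eq_sym oppr_eq0 oner_neq0.
apply/Pdiv.ClosedField.coprimepP => x; rewrite hornerstar rootE !hornerE !mulf_eq0 !negb_or i0 /=.
move=> /orP [/orP[/eqP ii|hx]| hy].
- by move: i0; rewrite ii eqxx.
- have xs : x = sg by apply/eqP; rewrite -subr_eq0.
  rewrite xs; apply/andP; split; last exact: nsg.
  by rewrite -opprD oppr_eq0 -mulr2n -mulr_natl mulf_neq0.
- have hy' : root y1 x by rewrite rootE.
  have := coprimep_root cp hy'; rewrite hornerstar => ->; rewrite andbT.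
  apply: contra nsg => /eqP h.
  have xe : x = - sg by apply/eqP; rewrite -subr_eq0 opprK; rewrite -oppr_eq0 opprD; apply/eqP.
  by rewrite -xe.
Qed.

Definition bil (a b d x1 y1 x2 y2 : {poly F}) :=
  pstar x1 * a * x2 + pstar x1 * b * y2 + pstar y1 * pstar b * x2 + pstar y1 * d * y2.

Lemma bil_expand a b d x1 y1 x2 y2 X Y X' Y' :
  bil a b d (X * x1 + Y * x2) (X * y1 + Y * y2) (X' * x1 + Y' * x2) (X' * y1 + Y' * y2)
  = pstar X * X' * bil a b d x1 y1 x1 y1 + pstar X * Y' * bil a b d x1 y1 x2 y2
    + pstar Y * X' * bil a b d x2 y2 x1 y1 + pstar Y * Y' * bil a b d x2 y2 x2 y2.
Proof. rewrite /bil; push; ring. Qed.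

Lemma bil_sym a b d x1 y1 x2 y2 : pstar a = a -> pstar d = d ->
  bil a b d x2 y2 x1 y1 = pstar (bil a b d x1 y1 x2 y2).
Proof. move=> ha hd; rewrite /bil; push; rewrite ?ha ?hd; ring. Qed.

Definition half : {poly F} := (2%:R^-1 : F)%:P.

Lemma half2 (hF : 2%:R != 0 :> F) : half + half = 1.
Proof. rewrite /half -polyCD; have -> : (2%:R^-1 + 2%:R^-1 : F) = 1 by field. by []. Qed.

Lemma pstar_half : pstar half = half.
Proof. exact: pstarC. Qed.

Lemma core (hF : 2%:R != 0 :> F) a b d x1 y1 x2 y2 :
  pstar a = a -> pstar d = d ->
  bil a b d x1 y1 x1 y1 = 0 ->
  coprimep (bil a b d x2 y2 x2 y2)
    (bil a b d x1 y1 x2 y2 * pstar (bil a b d x1 y1 x2 y2)) ->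
  exists p r, bil a b d p r p r = 1.
Proof.
move=> ha hd hv cop.
set be := bil a b d x1 y1 x2 y2 in cop *.
set de := bil a b d x2 y2 x2 y2 in cop *.
have hde : pstar de = de by rewrite /de -bil_sym.
have hbw : bil a b d x2 y2 x1 y1 = pstar be by rewrite bil_sym.
set Nb := be * pstar be in cop *.
have hNb : pstar Nb = Nb by rewrite /Nb pstarM pstarK mulrC.
have [[u1 u2] /= hu] := Bezout_eq1_coprimepP _ _ cop.
have hu' : pstar u1 * de + pstar u2 * Nb = 1.
  by rewrite -pstar1 -hu pstarD (pstarM u1) (pstarM u2) hde hNb.
have [e [f [he [hf [hef he0]]]]] : exists e f, pstar e = e /\ pstar f = f /\
    e * de + f * Nb = 1 /\ e.[0] != 0.
  pose e0 := half * (u1 + pstar u1); pose f0 := half * (u2 + pstar u2).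
  have he0 : pstar e0 = e0 by rewrite /e0; push; rewrite ?pstar_half; ring.
  have hf0 : pstar f0 = f0 by rewrite /f0; push; rewrite ?pstar_half; ring.
  have hef0 : e0 * de + f0 * Nb = 1.
    have -> : e0 * de + f0 * Nb = half * (u1 * de + u2 * Nb) + half * (pstar u1 * de + pstar u2 * Nb)
      by rewrite /e0 /f0; ring.
    by rewrite hu hu' !mulr1 half2.
  have [z0|nz0] := eqVneq e0.[0] 0; last by exists e0, f0.
  exists (e0 + Nb), (f0 - de); split; first by rewrite pstarD he0 hNb.
  split; first by rewrite pstarB hf0 hde.
  split; first by rewrite -hef0; ring.
  rewrite hornerD z0 add0r; apply/eqP => N0.
  by move: hef0 => /(congr1 (fun p => p.[0])); rewrite /= hornerD (hornerM e0) (hornerM f0) z0 N0 !mul0r mulr0 addr0 hornerC => /eqP; rewrite eq_sym oner_eq0.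
have [y [hy cy]] := @norm_lemma hF (size e) e (leqnn _) he.
have [[w1 w2] /= hw] := Bezout_eq1_coprimepP _ _ (cy he0).
pose Z := half * f * (w1 + pstar w2).
have hZ : y * Z + pstar (y * Z) = f.
  have -> : y * Z + pstar (y * Z) = half * f * (w1 * y + w2 * pstar y)
      + half * f * pstar (w1 * y + w2 * pstar y).
    by rewrite /Z; push; rewrite ?pstar_half hf; ring.
  by rewrite hw pstar1 !mulr1 -mulrDl (half2 hF) mul1r.
pose X := be * pstar Z.
exists (X * x1 + y * x2), (X * y1 + y * y2).
rewrite bil_expand hv hbw -/be -/de.
have -> : pstar X * X * 0 + pstar X * y * be + pstar y * X * pstar be + pstar y * y * de
  = Nb * (y * Z + pstar (y * Z)) + (y * pstar y) * de.
  by rewrite /X /Nb; push; ring.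
by rewrite hZ hy addrC [Nb * f]mulrC hef.
Qed.

Lemma pstar_eq0 p : (pstar p == 0) = (p == 0).
Proof.
apply/eqP/eqP => [h|->]; last exact: pstar0.
by rewrite -(pstarK p) h pstar0.
Qed.

Lemma iso (hF : 2%:R != 0 :> F) a b d : pstar a = a -> pstar d = d ->
  exists x1 y1 k1 k2, bil a b d x1 y1 x1 y1 = 0 /\ x1 * k1 + y1 * k2 = 1.
Proof.
move=> ha hd.
have [a0|an0] := eqVneq a 0.
  exists 1, 0, 1, 0; split; last by rewrite mulr1 mulr0 addr0.
  by rewrite /bil a0; push; ring.
pose D := a * d - b * pstar b.
have hD : pstar (- D) = - D by rewrite /D; push; rewrite ?ha ?hd; ring.
have [h [hh _]] := @norm_lemma hF (size (- D)) (- D) (leqnn _) hD.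
pose x0 := h - b; pose y0 := a.
have q0 : bil a b d x0 y0 x0 y0 = 0.
  apply: (mulfI an0); rewrite mulr0.
  have -> : a * bil a b d x0 y0 x0 y0 = pstar a * a * (pstar h * h - (- D)).
    by rewrite /x0 /y0 /D /bil; push; rewrite ?ha ?hd; ring.
  by rewrite -hh [pstar h * h]mulrC subrr mulr0.
pose g := gcdp x0 y0.
have g0 : g != 0 by rewrite gcdp_eq0 negb_and an0 orbT.
have cp : coprimep (x0 %/ g) (y0 %/ g) by apply: coprimep_div_gcd; rewrite an0 orbT.
have [[k1 k2] /= hk] := Bezout_eq1_coprimepP _ _ cp.
exists (x0 %/ g), (y0 %/ g), k1, k2; split; last by rewrite -hk mulrC [k2 * _]mulrC.
have ex : x0 = x0 %/ g * g by rewrite divpK // dvdp_gcdl.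
have ey : y0 = y0 %/ g * g by rewrite divpK // dvdp_gcdr.
have : pstar g * g * bil a b d (x0 %/ g) (y0 %/ g) (x0 %/ g) (y0 %/ g) = 0.
  rewrite -q0 [in RHS]ex [in RHS]ey /bil; push; ring.
move/eqP; rewrite !mulf_eq0 pstar_eq0 (negbTE g0) /= => /eqP; done.
Qed.

Lemma infinite_ex (s : seq F) : exists c, c \notin s.
Proof.
pose Q := \prod_(z <- s) ('X - z%:P).
have Q0 : Q != 0 by apply: monic_neq0; apply: monic_prod_XsubC.
have /closed_rootP [c hc] : size (Q * 'X + 1) != 1.
  rewrite size_polyDl size_mulX // ?size_poly1 ?ltnS ?lt0n ?size_poly_eq0 //.
  by rewrite eqSS size_poly_eq0.
exists c; apply/negP => cs.
have : root Q c by rewrite root_prod_XsubC.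
move: hc; rewrite !rootE !hornerE => /eqP h /eqP h2.
by move: h; rewrite h2 mul0r add0r => /eqP; rewrite oner_eq0.
Qed.

Lemma det_ident a b d x1 y1 x2 y2 :
  bil a b d x1 y1 x1 y1 * bil a b d x2 y2 x2 y2
  - bil a b d x1 y1 x2 y2 * bil a b d x2 y2 x1 y1
  = pstar (x1 * y2 - y1 * x2) * (x1 * y2 - y1 * x2) * (a * d - b * pstar b).
Proof. rewrite /bil; push; ring. Qed.

Lemma shift_b a b d x1 y1 x2 y2 c :
  bil a b d x1 y1 (c * x1 + x2) (c * y1 + y2)
  = c * bil a b d x1 y1 x1 y1 + bil a b d x1 y1 x2 y2.
Proof. rewrite /bil; push; ring. Qed.

Lemma shift_d a b d x1 y1 x2 y2 c :
  bil a b d (c * x1 + x2) (c * y1 + y2) (c * x1 + x2) (c * y1 + y2)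
  = pstar c * c * bil a b d x1 y1 x1 y1 + pstar c * bil a b d x1 y1 x2 y2
    + c * bil a b d x2 y2 x1 y1 + bil a b d x2 y2 x2 y2.
Proof. rewrite /bil; push; ring. Qed.

Lemma represent1 (hF : 2%:R != 0 :> F) a b d c00 c01 c10 c11 :
  pstar a = a -> pstar d = d -> a * d - b * pstar b != 0 ->
  c00 * a + c01 * b + c10 * pstar b + c11 * d = 1 ->
  exists p r, bil a b d p r p r = 1.
Proof.
move=> ha hd hD hc.
have [x1 [y1 [k1 [k2 [hq hk]]]]] := iso hF a b d ha hd.
pose x2 := - k2; pose y2 := k1.
have hdet := det_ident a b d x1 y1 x2 y2.
rewrite hq mul0r sub0r (bil_sym a b d x1 y1 x2 y2 ha hd) in hdet.
have h1 : x1 * y2 - y1 * x2 = 1 by rewrite /x2 /y2 mulrN opprK.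
rewrite h1 pstar1 !mul1r in hdet.
pose be := bil a b d x1 y1 x2 y2; pose de := bil a b d x2 y2 x2 y2.
have hNb0 : be * pstar be != 0.
  by rewrite -oppr_eq0 /be; move: hD; rewrite -hdet.
have gcdp0 : forall z, be.[z] = 0 -> be.[- z] = 0 -> de.[z] = 0 -> False.
  move=> z b1 b2 d1.
  have key : forall u1 u2 u1' u2',
      (bil a b d (u1 * x1 + u2 * x2) (u1 * y1 + u2 * y2)
                 (u1' * x1 + u2' * x2) (u1' * y1 + u2' * y2)).[z] = 0.
    move=> u1 u2 u1' u2'; rewrite bil_expand hq (bil_sym a b d x1 y1 x2 y2 ha hd).
    rewrite -/be -/de; clearbody be de; rewrite !hornerE !hornerstar b1 b2 d1; ring.
  have ex1 : k1 * x1 + (- y1) * x2 = 1 by rewrite /x2 -hk; ring.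
  have ey1 : k1 * y1 + (- y1) * y2 = 0 by rewrite /y2; ring.
  have ex2 : k2 * x1 + x1 * x2 = 0 by rewrite /x2; ring.
  have ey2 : k2 * y1 + x1 * y2 = 1 by rewrite /y2 -hk; ring.
  have A0 := key k1 (- y1) k1 (- y1); rewrite ex1 ey1 in A0.
  have B0 := key k1 (- y1) k2 x1; rewrite ex1 ey1 ex2 ey2 in B0.
  have B1 := key k2 x1 k1 (- y1); rewrite ex1 ey1 ex2 ey2 in B1.
  have D0 := key k2 x1 k2 x1; rewrite ex2 ey2 in D0.
  have eq_A0 : bil a b d 1 0 1 0 = a by rewrite /bil; push; ring.
  rewrite eq_A0 in A0.
  have eq_B0 : bil a b d 1 0 0 1 = b by rewrite /bil; push; ring.
  rewrite eq_B0 in B0.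
  have eq_B1 : bil a b d 0 1 1 0 = pstar b by rewrite /bil; push; ring.
  rewrite eq_B1 in B1.
  have eq_D0 : bil a b d 0 1 0 1 = d by rewrite /bil; push; ring.
  rewrite eq_D0 in D0.
  move: hc => /(congr1 (fun p => p.[z])); rewrite /= !hornerE A0 B0 B1 D0.
  by rewrite !mulr0 !addr0 => /eqP; rewrite eq_sym oner_eq0.
have [rs hrs] := closed_field_poly_normal (be * pstar be).
pose bad := [seq - de.[z] / (be.[z] + be.[- z]) | z <- rs].
have [c hcb] := infinite_ex bad.
have hb' := shift_b a b d x1 y1 x2 y2 c%:P.
have hd' := shift_d a b d x1 y1 x2 y2 c%:P.
rewrite hq mulr0 add0r -/be in hb'.
rewrite hq mulr0 add0r pstarC (bil_sym a b d x1 y1 x2 y2 ha hd) -/be -/de in hd'.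
apply: (@core hF a b d x1 y1 (c%:P * x1 + x2) (c%:P * y1 + y2) ha hd hq); rewrite hb' hd'; clearbody be de.
apply/Pdiv.ClosedField.coprimepP => z; rewrite rootE !hornerE hornerstar => /eqP hz.
apply/negP => /eqP hN.
have zin : z \in rs.
  have : root (be * pstar be) z by rewrite rootE hornerM hornerstar hN.
  by rewrite {1}hrs rootZ ?root_prod_XsubC // lead_coef_eq0.
move/eqP: hN; rewrite mulf_eq0 => hN.
have [s0|sn0] := eqVneq (be.[z] + be.[- z]) 0.
  have [b1 b2] : be.[z] = 0 /\ be.[- z] = 0.
    case/orP: hN => /eqP h; move: s0; rewrite h ?add0r ?addr0 => h'; by split.
  apply: (gcdp0 z b1 b2); move: hz; rewrite b1 b2 !mulr0 !add0r.
  done.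
move: hcb => /negP; apply; apply/mapP; exists z => //.
apply: (mulIf sn0); rewrite divfK //.
apply/eqP; rewrite -subr_eq0 opprK; apply/eqP; rewrite -hz; ring.
Qed.
Lemma I2 (i : 'I_2) : i = 0 \/ i = 1.
Proof. by case: i => [[|[|//]] hi]; [left|right]; apply: val_inj. Qed.

Lemma mul22 (R : pzRingType) (M N : 'M[R]_2) i j : (M *m N) i j = M i 0 * N 0 j + M i 1 * N 1 j.
Proof.
rewrite mxE !big_ord_recl big_ord0 addr0.
by congr (_ * _ + _ * _); congr (_ _ _); apply: val_inj.
Qed.

Lemma main_sec (hF : 2%:R != 0 :> F)
  (A : 'M[{poly F}]_2) :
  mxstar A = A -> \det A != 0 -> entries_gcd1 A ->
  exists S : 'M[{poly F}]_2,
    S \in unitmx /\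
    mxstar S *m A *m S = diag_mx (\row_(i < 2) if i == 0 then 1 else \det A).
Proof.
move=> hA hdet [C hC].
have hE : forall i j, pstar (A j i) = A i j.
  by move=> i j; move/matrixP: hA => /(_ i j); rewrite mxE.
have ha := hE 0 0; have hd := hE 1 1.
have hb : A 1 0 = pstar (A 0 1) by rewrite -(hE 0 1) pstarK.
rewrite det22 hb in hdet *.
move: hC; rewrite !big_ord_recl !big_ord0 !addr0 /=.
have l1 : lift ord0 (ord0 : 'I_1) = 1 :> 'I_2 by apply: val_inj.
have l0 : ord0 = 0 :> 'I_2 by apply: val_inj.
rewrite l1 l0 hb addrA => hC.
set a := A 0 0 in ha hC hdet *; set b := A 0 1 in hb hC hdet *; set d := A 1 1 in hd hC hdet *.
have [p [r hpr]] := represent1 hF _ _ _ _ _ _ _ ha hd hdet hC.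
pose u1 := pstar p * a + pstar r * pstar b.
pose u2 := pstar p * b + pstar r * d.
pose S : 'M[{poly F}]_2 := \matrix_(i < 2, j < 2)
  if i == 0 then (if j == 0 then p else - u2) else (if j == 0 then r else u1).
have S00 : S 0 0 = p by rewrite mxE.
have S01 : S 0 1 = - u2 by rewrite mxE.
have S10 : S 1 0 = r by rewrite mxE.
have S11 : S 1 1 = u1 by rewrite mxE.
have hdetS : \det S = bil a b d p r p r.
  by rewrite det22 S00 S01 S10 S11 /u1 /u2 /bil; ring.
exists S; split; first by rewrite unitmxE hdetS hpr unitr1.
have hm : bil a b d (- u2) u1 (- u2) u1 = a * d - b * pstar b.
  have := det_ident a b d p r (- u2) u1.
  have -> : p * u1 - r * - u2 = 1 by rewrite -hpr /u1 /u2 /bil; ring.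
  have -> : bil a b d p r (- u2) u1 = 0 by rewrite /u1 /u2 /bil; ring.
  by rewrite hpr pstar1 !mul1r mul0r subr0.
have n10 : (1 == 0 :> 'I_2) = false by [].
apply/matrixP => i j; rewrite !mul22 !mxE eqxx n10 -/a -/b -/d hb.
have [->|->] := I2 i; have [->|->] := I2 j; rewrite ?eqxx ?n10 /= ?mulr1n ?mulr0n.
- by rewrite -hpr /bil; ring.
- by rewrite /u1 /u2; ring.
- by rewrite /u1 /u2; push; rewrite ?ha ?hd; ring.
- by rewrite -hm /bil; ring.
Qed.

End S.

Theorem proposition3p1 (F : closedFieldType) (hF : 2%:R != 0 :> F)
  (A : 'M[{poly F}]_2) :
  mxstar A = A -> \det A != 0 -> entries_gcd1 A ->
  exists S : 'M[{poly F}]_2,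
    S \in unitmx /\
    mxstar S *m A *m S = diag_mx (\row_(i < 2) if i == 0 then 1 else \det A).
Proof. exact: main_sec. Qed.
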